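(* Consider an EF neuron as in the context, and suppose it receives no input spike after the end of its input time window, i.e. $\mathcal F_i^{in}\subseteq\{0,\ldots,T^{in}-1\}$ for all $i\in\Gamma$. Let $x=\max(V_m^-(T^{in}-1),0)$ and let $S\subseteq\{0,\ldots,T^{out}-1\}$ be the set of spike times of the LTC spike train of $x$ with the output exponent range $\{e^{out}_{min},\ldots,e^{out}_{max}\}$, where multi-spike LTC is used if the neuron is a multi-spike EF neuron and single-spike LTC is used if it is a single-spike EF neuron. Then the output spikes of the neuron within its output time window are exactly the shifted LTC spikes: $\mathcal F^{out}\cap\{T^{in}-1,\ldots,T^{in}+T^{out}-2\}=\{T^{in}-1+s : s\in S\}$.
   Context: Exponentiate-and-Fire (EF) neuron (discrete time $t\in\mathbb Z$). Fix integers $e^{in}_{min}\le e^{in}_{max}$ (input exponent range), $T^{in}=e^{in}_{max}-e^{in}_{min}+1$ (input time window $\{0,\ldots,T^{in}-1\}$), and integers $e^{out}_{min}\le e^{out}_{max}$ (output exponent range), $T^{out}=e^{out}_{max}-e^{out}_{min}+1$. The output time window is $\{T^{in}-1,\ldots,T^{in}+T^{out}-2\}$. The firing threshold is $V_{th}=2^{e^{out}_{max}}$. The neuron has a finite set $\Gamma$ of synapses with real weights $w_i$, and for each $i\in\Gamma$ a finite set $\mathcal F_i^{in}\subseteq\{0,1,2,\ldots\}$ of input spike times. PSP kernel: $\epsilon(s)=2^{e^{in}_{min}}\cdot 2^{s}\cdot\mathbb 1(s\ge 0)$; total PSP $h_i(t)=\sum_{t^{in}\in\mathcal F_i^{in}}\epsilon(t-t^{in})$.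 With $\mathcal F^{out}\subseteq\mathbb Z$ the set of output spike times and $\eta$ the afterhyperpolarizing kernel, the membrane potential is $V_m(t)=\sum_{i\in\Gamma}w_i h_i(t)+\sum_{t^{out}\in\mathcal F^{out}}\eta(t-t^{out})\,\mathbb 1(t\ge t^{out})$ and the pre-reset membrane potential is $V_m^-(t)=V_m(t)-\eta(0)\,\mathbb 1(t\in\mathcal F^{out})$ (which depends only on output spikes at times $<t$). Output spikes are generated recursively in time: $t\in\mathcal F^{out}$ if and only if $V_m^-(t)\ge V_{th}$ (so no output spikes occur at negative times, where $V_m^-=0$). For a multi-spike EF neuron, the output spike at $t^{out}$ contributes $\eta(s)=-V_{th}\cdot 2^{s}$ (reset by subtraction); for a single-spike EF neuron it contributes $\eta(s)=-V_m^-(t^{out})\cdot 2^{s}$ (reset to zero). Logarithmic approximation and LTC, for integers $e_{min}\le e_{max}$ and real $a$: the multi-power LA is $\tilde a=0$ if $a<2^{e_{min}}$, $\tilde a=\lfloor a/2^{e_{min}}\rfloor 2^{e_{min}}$ if $2^{e_{min}}\le a<2^{e_{max}+1}$, $\tilde a=2^{e_{max}+1}-2^{e_{min}}$ if $a\ge 2^{e_{max}+1}$. The single-power LA is $\tilde a=0$ if $a<2^{e_{min}}$, $\tilde a=2^{\lfloor\log_2 a\rfloor}$ if $2^{e_{min}}\le a<2^{e_{max}+1}$, $\tilde a=2^{e_{max}}$ if $a\ge 2^{e_{max}+1}$. Writing $\tilde a=\sum_{e\in E}2^e$ with distinct $E\subseteq\{e_{min},\ldots,e_{max}\}$, the LTC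 spike train of $a$ is the set of spike times $\{e_{max}-e: e\in E\}\subseteq\{0,\ldots,e_{max}-e_{min}\}$; it is called multi-spike LTC when multi-power LA is used and single-spike LTC when single-power LA is used. *)

(* Defs.v *)
From Stdlib Require Import Reals ZArith List.
Open Scope R_scope.

Inductive ef_kind := MultiSpike | SingleSpike.

(* A synapse: (weight w_i, list of input spike times F_i^in). *)
Definition synapse := (R * list nat)%type.

Definition Twin (emin emax : Z) : nat := Z.to_nat (emax - emin + 1).

Definition eps (ein_min : Z) (t tin : nat) : R :=
  if (tin <=? t)%nat then powerRZ 2 ein_min * 2 ^ (t - tin) else 0.

Definition psp (ein_min : Z) (Fi : list nat) (t : nat) : R :=
  fold_right (fun tin acc => eps ein_min t tin + acc) 0 Fi.

Definition input_drive (ein_min : Z) (syn : list synapse) (t : nat) : R :=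
  fold_right (fun s acc => fst s * psp ein_min (snd s) t + acc) 0 syn.

Definition Vth (eout_max : Z) : R := powerRZ 2 eout_max.

(* eta(0) for an output spike whose pre-reset potential was v;
   eta(s) = eta_amp * 2^s. *)
Definition eta_amp (k : ef_kind) (eout_max : Z) (v : R) : R :=
  match k with MultiSpike => - Vth eout_max | SingleSpike => - v end.

(* Pre-reset potential at t given the history H of earlier output spikes
   (pairs (t_out, V_m^-(t_out)), all with t_out < t). *)
Definition vpre_from (k : ef_kind) (ein_min eout_max : Z) (syn : list synapse)
  (H : list (nat * R)) (t : nat) : R :=
  input_drive ein_min syn t +
  fold_right (fun p acc => eta_amp k eout_max (snd p) * 2 ^ (t - fst p) + acc) 0 H.

(* Output spikes at times < t (with their pre-reset potentials), generated
   recursively in time. Output spike times are nonnegative (V_m^- = 0 < V_th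
   at negative times). *)
Fixpoint out_hist (k : ef_kind) (ein_min eout_max : Z) (syn : list synapse)
  (t : nat) : list (nat * R) :=
  match t with
  | O => nil
  | S t' =>
      let H := out_hist k ein_min eout_max syn t' in
      let v := vpre_from k ein_min eout_max syn H t' in
      if Rle_dec (Vth eout_max) v then H ++ (t', v) :: nil else H
  end.

Definition Vpre (k : ef_kind) (ein_min eout_max : Z) (syn : list synapse) (t : nat) : R :=
  vpre_from k ein_min eout_max syn (out_hist k ein_min eout_max syn t) t.

Definition fires (k : ef_kind) (ein_min eout_max : Z) (syn : list synapse) (t : nat) : Prop :=
  Vth eout_max <= Vpre k ein_min eout_max syn t.

Definition floorR (x : R) : Z := (up x - 1)%Z.

Definition multi_LA (emin emax : Z) (a : R) : R :=
  if Rlt_dec a (powerRZ 2 emin) then 0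
  else if Rlt_dec a (powerRZ 2 (emax + 1)) then
    IZR (floorR (a / powerRZ 2 emin)) * powerRZ 2 emin
  else powerRZ 2 (emax + 1) - powerRZ 2 emin.

Definition single_LA (emin emax : Z) (a : R) : R :=
  if Rlt_dec a (powerRZ 2 emin) then 0
  else if Rlt_dec a (powerRZ 2 (emax + 1)) then
    powerRZ 2 (floorR (ln a / ln 2))
  else powerRZ 2 emax.

Definition LA (k : ef_kind) (emin emax : Z) (a : R) : R :=
  match k with MultiSpike => multi_LA emin emax a | SingleSpike => single_LA emin emax a end.

(* S is the LTC spike train of a: S = {emax - e : e in E} where E is a set of
   distinct exponents in {emin..emax} with LA(a) = sum_{e in E} 2^e. *)
Definition is_LTC (k : ef_kind) (emin emax : Z) (a : R) (S : list nat) : Prop :=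
  NoDup S /\
  (forall s, In s S -> (Z.of_nat s <= emax - emin)%Z) /\
  LA k emin emax a = fold_right (fun s acc => powerRZ 2 (emax - Z.of_nat s) + acc) 0 S.

(* Main.v *)
Require Import Defs.
From Stdlib Require Import Reals ZArith List Lia Lra.
Open Scope R_scope.

Fixpoint tsum (f : nat -> bool) (g : nat -> R) (s n : nat) : R :=
  match n with O => 0 | S n' => (if f s then g s else 0) + tsum f g (S s) n' end.

Lemma tsum_ext f f' g s n : (forall j, (s <= j < s + n)%nat -> f j = f' j) ->
  tsum f g s n = tsum f' g s n.
Proof.
  revert s; induction n; intros s H; simpl; auto.
  rewrite (H s) by lia. rewrite (IHn (S s)); auto. intros; apply H; lia.
Qed.

Lemma tsum_false g s n : tsum (fun _ => false) g s n = 0.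
Proof. revert s; induction n; intros; simpl; auto. rewrite IHn; ring. Qed.

Lemma tsum_add f g a s n : f a = false -> (s <= a < s + n)%nat ->
  tsum (fun j => f j || Nat.eqb j a)%bool g s n = tsum f g s n + g a.
Proof.
  revert s; induction n; intros s Hf Ha; simpl. lia.
  destruct (Nat.eq_dec s a).
  - subst. rewrite Hf. simpl. rewrite Nat.eqb_refl.
    rewrite (tsum_ext _ f). ring. intros j Hj.
    replace (Nat.eqb j a) with false. apply Bool.orb_false_r.
    symmetry; apply Nat.eqb_neq; lia.
  - rewrite IHn by (auto; lia). replace (Nat.eqb s a) with false.
    rewrite Bool.orb_false_r. ring. symmetry; apply Nat.eqb_neq; auto.
Qed.

Definition memb (S : list nat) (j : nat) : bool :=
  if in_dec Nat.eq_dec j S then true else false.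

Lemma list_tsum g S s n : NoDup S -> (forall j, In j S -> (s <= j < s + n)%nat) ->
  fold_right (fun j acc => g j + acc) 0 S = tsum (memb S) g s n.
Proof.
  induction S as [|a S IH]; intros Hn Hb; simpl.
  - rewrite (tsum_ext _ (fun _ => false)). rewrite tsum_false; auto.
    intros; unfold memb; destruct in_dec; auto. destruct i.
  - inversion Hn; subst.
    rewrite (tsum_ext _ (fun j => memb S j || Nat.eqb j a)%bool).
    rewrite tsum_add. rewrite IH; auto. ring. intros; apply Hb; simpl; auto.
    unfold memb; destruct in_dec; tauto. apply Hb; simpl; auto.
    intros j _. unfold memb. destruct (in_dec Nat.eq_dec j (a :: S)) as [[->|H]|H].
    rewrite Nat.eqb_refl; destruct in_dec; auto.
    destruct in_dec; [auto| tauto].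
    destruct in_dec. exfalso; apply H; simpl; auto.
    symmetry; apply Nat.eqb_neq. intro; subst; apply H; simpl; auto.
Qed.

Lemma tsum_nonneg f g s n : (forall j, 0 <= g j) -> 0 <= tsum f g s n.
Proof.
  revert s; induction n; intros; simpl. lra.
  specialize (IHn (S s) H). destruct (f s); [specialize (H s)|]; lra.
Qed.

Lemma tsum_delta g a s n : (s <= a < s + n)%nat ->
  tsum (fun j => Nat.eqb j a) g s n = g a.
Proof.
  intros. rewrite (tsum_ext _ (fun j => (fun _ => false) j || Nat.eqb j a)%bool).
  rewrite tsum_add; auto. rewrite tsum_false; ring. intros; reflexivity.
Qed.

Lemma tsum_snoc f g s n : tsum f g s (S n) = tsum f g s n + (if f (s + n)%nat then g (s+n)%nat else 0).
Proof.
  revert s; induction n; intros; simpl.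
  rewrite Nat.add_0_r; ring.
  specialize (IHn (S s)). simpl in IHn. rewrite IHn. rewrite Nat.add_succ_r. ring.
Qed.

Lemma tsum_bound f g s n : (forall j, g (S j) * 2 = g j) -> (forall j, 0 <= g j) ->
  tsum f g s n + 2 * g (s + n)%nat <= 2 * g s.
Proof.
  intros Hg Hp. revert s; induction n; intros; simpl.
  rewrite Nat.add_0_r; lra.
  specialize (IHn (S s)). rewrite Nat.add_succ_r. simpl in IHn.
  specialize (Hg s). specialize (Hp s). destruct (f s); lra.
Qed.

Lemma tsum_true g s n : (forall j, g (S j) * 2 = g j) ->
  tsum (fun _ => true) g s n + 2 * g (s + n)%nat = 2 * g s.
Proof.
  intros Hg. revert s; induction n; intros; simpl.
  rewrite Nat.add_0_r; lra.
  specialize (IHn (S s)). rewrite Nat.add_succ_r. simpl in IHn.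
  specialize (Hg s). lra.
Qed.

Lemma eps_double e t tin : (tin <= t)%nat -> eps e (S t) tin = 2 * eps e t tin.
Proof.
  intros H. unfold eps.
  replace (tin <=? S t)%nat with true by (symmetry; apply Nat.leb_le; lia).
  replace (tin <=? t)%nat with true by (symmetry; apply Nat.leb_le; lia).
  rewrite Nat.sub_succ_l by auto. simpl. ring.
Qed.

Lemma psp_double e Fi t : (forall tin, In tin Fi -> (tin <= t)%nat) ->
  psp e Fi (S t) = 2 * psp e Fi t.
Proof.
  induction Fi; intros H; unfold psp in *; simpl. ring.
  rewrite eps_double by (apply H; simpl; auto).
  rewrite IHFi by (intros; apply H; simpl; auto). ring.
Qed.

Lemma drive_double e syn t : (forall w Fi tin, In (w,Fi) syn -> In tin Fi -> (tin <= t)%nat) ->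
  input_drive e syn (S t) = 2 * input_drive e syn t.
Proof.
  induction syn as [|[w Fi] syn IH]; intros H; unfold input_drive in *; simpl. ring.
  rewrite psp_double by (intros; eapply H; simpl; eauto).
  rewrite IH by (intros; eapply H; simpl; eauto). ring.
Qed.

Lemma hist_lt k e0 E syn t p : In p (out_hist k e0 E syn t) -> (fst p < t)%nat.
Proof.
  revert p; induction t; simpl; intros p H. destruct H.
  destruct Rle_dec.
  - apply in_app_or in H. destruct H as [H|[H|[]]].
    apply IHt in H; lia. subst; simpl; lia.
  - apply IHt in H; lia.
Qed.

Lemma fold_sum0 (A : Type) (g : A -> R) c l :
  fold_right (fun p acc => g p + acc) c l = fold_right (fun p acc => g p + acc) 0 l + c.
Proof. induction l; simpl. ring. rewrite IHl. ring. Qed.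

Lemma hfold_double k E (H : list (nat * R)) t : (forall p, In p H -> (fst p <= t)%nat) ->
  fold_right (fun p acc => eta_amp k E (snd p) * 2 ^ (S t - fst p) + acc) 0 H =
  2 * fold_right (fun p acc => eta_amp k E (snd p) * 2 ^ (t - fst p) + acc) 0 H.
Proof.
  induction H as [|p H IH]; intros Hb; cbn [fold_right]. ring.
  rewrite IH by (intros; apply Hb; simpl; auto).
  rewrite Nat.sub_succ_l by (apply Hb; simpl; auto). simpl. ring.
Qed.

Lemma Vpre_step k e0 E syn t :
  (forall w Fi tin, In (w,Fi) syn -> In tin Fi -> (tin <= t)%nat) ->
  Vpre k e0 E syn (S t) = 2 * (Vpre k e0 E syn t +
     if Rle_dec (Vth E) (Vpre k e0 E syn t) then eta_amp k E (Vpre k e0 E syn t) else 0).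
Proof.
  intros Hs. unfold Vpre at 1. simpl out_hist.
  fold (Vpre k e0 E syn t).
  unfold Vpre. unfold vpre_from at 1 3.
  set (H := out_hist k e0 E syn t).
  assert (Hb : forall p, In p H -> (fst p <= t)%nat).
  { intros p Hp. apply hist_lt in Hp. lia. }
  rewrite drive_double by auto.
  destruct Rle_dec.
  - rewrite fold_right_app. rewrite fold_sum0. rewrite hfold_double by auto.
    cbn [fold_right fst snd]. rewrite Nat.sub_succ_l, Nat.sub_diag by lia. unfold vpre_from. simpl pow. ring.
  - rewrite hfold_double by auto. unfold vpre_from. ring.
Qed.

Lemma p2_succ a : powerRZ 2 (a + 1) = powerRZ 2 a * 2.
Proof. rewrite powerRZ_add by lra. simpl. ring. Qed.

Lemma p2_pos a : 0 < powerRZ 2 a.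
Proof. apply powerRZ_lt; lra. Qed.

Lemma p2_nat (n : nat) : powerRZ 2 (Z.of_nat n) = 2 ^ n.
Proof. rewrite pow_powerRZ; auto. Qed.

Lemma p2_le a b : (a <= b)%Z -> powerRZ 2 a <= powerRZ 2 b.
Proof.
  intros H. replace b with (a + Z.of_nat (Z.to_nat (b - a)))%Z by lia.
  rewrite powerRZ_add by lra. rewrite p2_nat.
  pose proof (p2_pos a). pose proof (pow_R1_Rle 2 (Z.to_nat (b - a)) ltac:(lra)).
  nra.
Qed.

Lemma p2_lt a b : (a < b)%Z -> powerRZ 2 a < powerRZ 2 b.
Proof.
  intros H. replace b with ((a + 1) + Z.of_nat (Z.to_nat (b - a - 1)))%Z by lia.
  rewrite powerRZ_add by lra. rewrite p2_nat, p2_succ.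
  pose proof (p2_pos a). pose proof (pow_R1_Rle 2 (Z.to_nat (b - a - 1)) ltac:(lra)).
  nra.
Qed.

Definition qq (E : Z) (j : nat) : R := powerRZ 2 (E - Z.of_nat j).

Lemma qq_half E j : qq E (S j) * 2 = qq E j.
Proof.
  unfold qq. rewrite <- p2_succ. f_equal. lia.
Qed.

Lemma qq_pos E j : 0 < qq E j.
Proof. apply p2_pos. Qed.

Lemma qq_W E s : 2 ^ s * qq E s = powerRZ 2 E.
Proof.
  unfold qq. rewrite <- p2_nat, <- powerRZ_add by lra. f_equal; lia.
Qed.

Lemma floorR_spec y : IZR (floorR y) <= y < IZR (floorR y) + 1.
Proof.
  unfold floorR. rewrite minus_IZR. pose proof (archimed y). simpl. lra.
Qed.

Lemma floorR_eq (N : Z) y : 0 <= y < 1 -> floorR (IZR N + y) = N.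
Proof.
  intros H. unfold floorR. rewrite <- (tech_up (IZR N + y) (N + 1)). lia.
  rewrite plus_IZR; simpl; lra. rewrite plus_IZR; simpl; lra.
Qed.

Lemma tsum_int f E em s n : (s + n <= S (Z.to_nat (E - em)))%nat -> (em <= E)%Z ->
  exists N : Z, tsum f (qq E) s n = IZR N * powerRZ 2 em.
Proof.
  revert s; induction n; intros s Hs HE; simpl.
  - exists 0%Z. simpl; ring.
  - destruct (IHn (S s) ltac:(lia) HE) as [N HN]. rewrite HN.
    destruct (f s).
    + exists (2 ^ (E - Z.of_nat s - em) + N)%Z. rewrite plus_IZR.
      unfold qq. replace (E - Z.of_nat s)%Z with (Z.of_nat (Z.to_nat (E - Z.of_nat s - em)) + em)%Z by lia.
      rewrite powerRZ_add by lra. rewrite p2_nat. rewrite pow_IZR.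
      replace (Z.of_nat (Z.to_nat (E - Z.of_nat s - em))) with (E - Z.of_nat s - em)%Z by lia.
      replace (E - Z.of_nat s - em + em - em)%Z with (E - Z.of_nat s - em)%Z by lia. ring.
    + exists N; ring.
Qed.

Lemma greedy (g : nat -> R) v0 : (forall j, g (S j) * 2 = g j) -> (forall j, 0 < g j) ->
  0 <= v0 < 2 * g 0%nat -> forall n, exists f r, v0 = tsum f g 0 n + r /\ 0 <= r < 2 * g n.
Proof.
  intros Hg Hp Hv. induction n.
  - exists (fun _ => false), v0. simpl. split; lra.
  - destruct IHn as [f [r [H1 H2]]].
    exists (fun j => if Nat.eqb j n then (if Rle_dec (g n) r then true else false) else f j).
    rewrite tsum_snoc. rewrite (tsum_ext _ f).
    simpl. rewrite Nat.eqb_refl. pose proof (Hg n).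
    destruct Rle_dec.
    + exists (r - g n). split; lra.
    + exists r. split; lra.
    + intros j Hj. replace (Nat.eqb j n) with false; auto. symmetry; apply Nat.eqb_neq; lia.
Qed.

Lemma digit f g m s r : (forall j, g (S j) * 2 = g j) -> (forall j, 0 < g j) ->
  (s <= m)%nat -> 0 <= r < g m ->
  (g s <= tsum f g s (S m - s) + r <-> f s = true).
Proof.
  intros Hg Hp Hs Hr.
  replace (S m - s)%nat with (S (m - s)) by lia. simpl.
  pose proof (tsum_bound f g (S s) (m - s) Hg ltac:(intros; apply Rlt_le; auto)).
  replace (S s + (m - s))%nat with (S m) in H by lia.
  pose proof (tsum_nonneg f g (S s) (m - s) ltac:(intros; apply Rlt_le; auto)).
  pose proof (Hg m). pose proof (Hg s). pose proof (Hp s).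
  destruct (f s); split; intros; auto; try lra; discriminate.
Qed.

Lemma bool_iff (P : Prop) b1 b2 : (P <-> b1 = true) -> (P <-> b2 = true) -> b1 = b2.
Proof. destruct b1, b2; intuition. Qed.

Lemma tsum_unique f f' g m : (forall j, g (S j) * 2 = g j) -> (forall j, 0 < g j) ->
  tsum f g 0 (S m) = tsum f' g 0 (S m) -> forall s, (s <= m)%nat -> f s = f' s.
Proof.
  intros Hg Hp H.
  assert (forall s, (s <= m)%nat -> tsum f g s (S m - s) = tsum f' g s (S m - s) /\ f s = f' s).
  { induction s; intros Hs.
    - rewrite Nat.sub_0_r. split; auto.
      pose proof (digit f g m 0 0 Hg Hp Hs) as D1.
      pose proof (digit f' g m 0 0 Hg Hp Hs) as D2.
      rewrite Nat.sub_0_r in D1, D2. rewrite H in D1.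
      pose proof (Hp m).
      eapply bool_iff; [apply D1|apply D2]; lra.
    - destruct (IHs ltac:(lia)) as [IH1 IH2].
      replace (S m - s)%nat with (S (S m - S s)) in IH1 by lia. cbn [tsum] in IH1.
      rewrite IH2 in IH1.
      assert (E: tsum f g (S s) (S m - S s) = tsum f' g (S s) (S m - S s)) by (destruct (f' s); lra).
      split; auto.
      pose proof (digit f g m (S s) 0 Hg Hp Hs) as D1.
      pose proof (digit f' g m (S s) 0 Hg Hp Hs) as D2.
      rewrite E in D1. pose proof (Hp m).
      eapply bool_iff; [apply D1|apply D2]; lra. }
  intros; apply H0; auto.
Qed.

Lemma multi_dyn (v : nat -> R) W f g m r :
  (forall j, g (S j) * 2 = g j) -> (forall j, 0 < g j) ->
  (forall s, 2 ^ s * g s = W) ->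
  (forall s, v (S s) = 2 * (v s - if Rle_dec W (v s) then W else 0)) ->
  0 <= r < g m -> v 0%nat = tsum f g 0%nat (S m) + r ->
  forall s, (s <= m)%nat -> (W <= v s <-> f s = true).
Proof.
  intros Hg Hp HW Hv Hr H0.
  assert (Inv: forall s, (s <= m)%nat -> v s = 2 ^ s * (tsum f g s (S m - s) + r)).
  { induction s; intros Hs.
    - rewrite Nat.sub_0_r, H0. cbn [pow]. ring.
    - rewrite Hv. rewrite IHs by lia.
      pose proof (digit f g m s r Hg Hp ltac:(lia) Hr) as D.
      pose proof (HW s) as Ws. pose proof (pow_lt 2 s ltac:(lra)).
      replace (S m - s)%nat with (S (S m - S s)) in * by lia. cbn [tsum] in D, IHs |- *.
      simpl pow.
      destruct Rle_dec as [Hle|Hle]; destruct (f s) eqn:Ef.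
      + rewrite <- Ws. ring.
      + exfalso. assert (g s <= tsum f g (S s) (S m - S s) + r).
        { apply (Rmult_le_reg_l (2^s)); auto. rewrite Ws. lra. }
        destruct D as [D _]. discriminate (D ltac:(lra)).
      + exfalso. apply Hle. rewrite <- Ws. apply Rmult_le_compat_l; try lra.
      + ring. }
  intros s Hs. rewrite Inv by auto.
  rewrite <- (digit f g m s r Hg Hp Hs Hr).
  pose proof (HW s) as Ws. pose proof (pow_lt 2 s ltac:(lra)).
  split; intros.
  - apply (Rmult_le_reg_l (2^s)); auto. lra.
  - rewrite <- Ws. apply Rmult_le_compat_l; lra.
Qed.

Lemma p2_exp z : powerRZ 2 z = exp (IZR z * ln 2).
Proof. rewrite powerRZ_Rpower by lra. reflexivity. Qed.

Lemma ln2_pos : 0 < ln 2.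
Proof. pose proof ln_lt_2. lra. Qed.

Lemma exp_le_iff a b : exp a <= exp b <-> a <= b.
Proof.
  split; intros H.
  - destruct (Rle_dec a b); auto. exfalso. pose proof (exp_increasing b a ltac:(lra)). lra.
  - destruct H as [H|H]. left; apply exp_increasing; auto. subst; lra.
Qed.

Lemma le_log z v : 0 < v -> (powerRZ 2 z <= v <-> IZR z <= ln v / ln 2).
Proof.
  intros Hv. rewrite p2_exp. rewrite <- (exp_ln v) at 1 by auto.
  rewrite exp_le_iff. pose proof ln2_pos.
  set (y := ln v / ln 2). assert (ln v = y * ln 2) by (unfold y; field; lra).
  rewrite H0. split; intros.
  - apply (Rmult_le_reg_r (ln 2)); auto.
  - apply Rmult_le_compat_r; lra.
Qed.

Lemma lt_log z v : 0 < v -> (v < powerRZ 2 z <-> ln v / ln 2 < IZR z).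
Proof.
  intros Hv. pose proof (le_log z v Hv). split; intros.
  - destruct (Rlt_dec (ln v / ln 2) (IZR z)); auto. exfalso.
    assert (powerRZ 2 z <= v) by (apply H; lra). lra.
  - destruct (Rlt_dec v (powerRZ 2 z)); auto. exfalso.
    assert (IZR z <= ln v / ln 2) by (apply H; lra). lra.
Qed.

Section Single.
Variable (v : nat -> R) (W : R).
Hypothesis HW : 0 < W.
Hypothesis Hs : forall s, v (S s) = if Rle_dec W (v s) then 0 else 2 * v s.

Lemma SL1 s : (forall s', (s' < s)%nat -> 2 ^ s' * v 0%nat < W) -> v s = 2 ^ s * v 0%nat.
Proof.
  induction s; intros H. simpl; ring.
  rewrite Hs. rewrite IHs by (intros; apply H; lia).
  destruct Rle_dec. exfalso. specialize (H s ltac:(lia)). lra. simpl; ring.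
Qed.

Lemma SL2 s0 : W <= v s0 -> forall j, v (S s0 + j)%nat = 0.
Proof.
  intros H. induction j.
  - rewrite Nat.add_0_r, Hs. destruct Rle_dec; [auto|lra].
  - rewrite Nat.add_succ_r, Hs, IHj. destruct Rle_dec; [auto|lra].
Qed.

Lemma SG m s0 : (s0 <= m)%nat -> (forall s', (s' < s0)%nat -> 2 ^ s' * v 0%nat < W) ->
  W <= 2 ^ s0 * v 0%nat -> forall s, (s <= m)%nat -> (W <= v s <-> Nat.eqb s s0 = true).
Proof.
  intros H0 H1 H2 s Hsm. rewrite Nat.eqb_eq.
  assert (F: W <= v s0) by (rewrite SL1; auto).
  destruct (Nat.lt_trichotomy s s0) as [Hl|[->|Hl]].
  - rewrite SL1 by (intros; apply H1; lia). specialize (H1 s Hl). split; intros; [lra|lia].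
  - tauto.
  - replace s with (S s0 + (s - S s0))%nat by lia. rewrite (SL2 s0 F). split; intros; [lra|lia].
Qed.

Lemma SN m : (forall s, (s <= m)%nat -> 2 ^ s * v 0%nat < W) ->
  forall s, (s <= m)%nat -> ~ W <= v s.
Proof.
  intros H s Hs'. rewrite SL1 by (intros; apply H; lia). specialize (H s Hs'). lra.
Qed.
End Single.

Lemma final k e0 em E syn n0 m x f0 :
  (forall s, (s <= m)%nat -> (fires k e0 E syn (n0+s) <-> f0 s = true)) ->
  LA k em E x = tsum f0 (qq E) 0 (S m) ->
  Z.of_nat m = (E - em)%Z ->
  (exists S, is_LTC k em E x S) /\
  (forall S, is_LTC k em E x S -> forall t,
     ((n0 <= t <= n0 + m)%nat /\ fires k e0 E syn t) <-> exists s, In s S /\ t = (n0 + s)%nat).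
Proof.
  intros H1 H2 Hm. split.
  - exists (filter f0 (seq 0 (S m))).
    assert (Hb : forall j, In j (filter f0 (seq 0 (S m))) -> (0 <= j < 0 + S m)%nat).
    { intros j Hj. apply filter_In in Hj. destruct Hj as [Hj _]. apply in_seq in Hj. lia. }
    split; [|split].
    + apply NoDup_filter, seq_NoDup.
    + intros s Hs. apply Hb in Hs. lia.
    + pose proof (list_tsum (qq E) (filter f0 (seq 0 (S m))) 0 (S m)
        ltac:(apply NoDup_filter, seq_NoDup) Hb) as L.
      unfold qq in L. rewrite L, H2. apply tsum_ext.
      intros j Hj. unfold memb. destruct in_dec as [i|n].
      * apply filter_In in i. destruct i; auto.
      * destruct (f0 j) eqn:E1; auto. exfalso; apply n. apply filter_In. split; auto.
        apply in_seq; lia.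
  - intros L0 [Hnd [Hb Hsum]].
    assert (Hb' : forall j, In j L0 -> (0 <= j < 0 + S m)%nat).
    { intros j Hj. apply Hb in Hj. lia. }
    pose proof (list_tsum (qq E) L0 0 (S m) Hnd Hb') as L.
    assert (Q: tsum (memb L0) (qq E) 0 (S m) = tsum f0 (qq E) 0 (S m)).
    { rewrite <- L, <- H2, Hsum. reflexivity. }
    pose proof (tsum_unique _ _ _ m (qq_half E) (qq_pos E) Q) as U.
    assert (M : forall s, (s <= m)%nat -> (fires k e0 E syn (n0+s) <-> In s L0)).
    { intros s Hs. rewrite H1 by auto. rewrite <- U by auto. unfold memb.
      destruct in_dec; split; auto; discriminate. }
    intros t. split.
    + intros [Ht Hf]. exists (t - n0)%nat. split; [|lia].
      apply M. lia. replace (n0 + (t - n0))%nat with t by lia. auto.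
    + intros [s [Hs ->]]. pose proof (Hb' s Hs). split. lia. apply M; auto. lia.
Qed.

Lemma key k em E m (v : nat -> R) :
  (em <= E)%Z -> Z.of_nat m = (E - em)%Z ->
  (forall s, v (S s) = 2 * (v s + if Rle_dec (Vth E) (v s) then eta_amp k E (v s) else 0)) ->
  exists f0, (forall s, (s <= m)%nat -> (Vth E <= v s <-> f0 s = true)) /\
     LA k em E (Rmax (v 0%nat) 0) = tsum f0 (qq E) 0 (S m).
Proof.
  intros HE Hm Hstep.
  assert (Wq : Vth E = powerRZ 2 E) by reflexivity.
  assert (HW : 0 < Vth E) by apply p2_pos.
  assert (Qm : qq E m = powerRZ 2 em) by (unfold qq; f_equal; lia).
  assert (Q0 : qq E 0 = powerRZ 2 E) by (unfold qq; f_equal; lia).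
  pose proof (p2_pos em) as Pem.
  destruct (Rle_dec (v 0%nat) 0) as [Hneg|Hpos].
  - exists (fun _ => false). rewrite Rmax_right by auto. rewrite tsum_false. split.
    + assert (N: forall s, v s <= 0).
      { induction s; auto. rewrite Hstep. destruct Rle_dec; lra. }
      intros s _. specialize (N s). split; intros; [lra|discriminate].
    + destruct k; unfold LA, multi_LA, single_LA; destruct Rlt_dec; auto; lra.
  - rewrite Rmax_left by lra. set (v0 := v 0%nat) in *.
    destruct k.
    + assert (Hm' : forall s, v (S s) = 2 * (v s - if Rle_dec (Vth E) (v s) then Vth E else 0)).
      { intros s. rewrite Hstep. simpl eta_amp. destruct Rle_dec; ring. }
      assert (HWq : forall s, 2 ^ s * qq E s = Vth E) by (intros; rewrite qq_W; auto).
      unfold LA, multi_LA.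
      destruct (Rlt_dec v0 (powerRZ 2 em)) as [B1|B1];
        [|destruct (Rlt_dec v0 (powerRZ 2 (E + 1))) as [B2|B2]].
      * exists (fun _ => false). rewrite tsum_false. split; auto.
        intros s Hs. apply (multi_dyn v (Vth E) (fun _ => false) (qq E) m v0); auto.
        apply qq_half. apply qq_pos. rewrite Qm; lra. rewrite tsum_false. unfold v0; ring.
      * destruct (greedy (qq E) v0 (qq_half E) (qq_pos E)) with (n := S m) as [f [r [H1 H2]]].
        { rewrite Q0. rewrite p2_succ in B2. lra. }
        pose proof (qq_half E m) as Hh. rewrite Qm in Hh.
        exists f. split.
        -- intros s Hs. apply (multi_dyn v (Vth E) f (qq E) m r); auto.
           apply qq_half. apply qq_pos. rewrite Qm; lra.
        -- destruct (tsum_int f E em 0 (S m) ltac:(lia) HE) as [N HN].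
           rewrite H1, HN. replace ((IZR N * powerRZ 2 em + r) / powerRZ 2 em)
             with (IZR N + r / powerRZ 2 em) by (field; lra).
           rewrite floorR_eq. auto.
           split. apply Rmult_le_pos; [lra|apply Rlt_le, Rinv_0_lt_compat; auto].
           apply (Rmult_lt_reg_r (powerRZ 2 em)); auto. field_simplify; lra.
      * exists (fun _ => true). split.
        -- assert (N: forall s, 2 * Vth E <= v s).
           { induction s. unfold v0 in B2. rewrite Wq. rewrite p2_succ in B2. lra.
             rewrite Hm'. destruct Rle_dec; lra. }
           intros s _. specialize (N s). split; intros; auto. lra.
        -- pose proof (tsum_true (qq E) 0 (S m) (qq_half E)) as T.
           pose proof (qq_half E m) as Hh. rewrite Nat.add_0_l in T. rewrite Q0, Qm in *.
           rewrite p2_succ. lra.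
    + assert (Hs : forall s, v (S s) = if Rle_dec (Vth E) (v s) then 0 else 2 * v s).
      { intros s. rewrite Hstep. simpl eta_amp. destruct Rle_dec; ring. }
      unfold LA, single_LA.
      destruct (Rlt_dec v0 (powerRZ 2 em)) as [B1|B1];
        [|destruct (Rlt_dec v0 (powerRZ 2 (E + 1))) as [B2|B2]].
      * exists (fun _ => false). rewrite tsum_false. split; auto.
        intros s Hsm. split; [|discriminate]. intros F; exfalso; revert F.
        apply (SN v (Vth E) Hs m); auto.
        intros s' Hs'. fold v0. rewrite <- p2_nat.
        apply Rlt_le_trans with (powerRZ 2 (Z.of_nat s') * powerRZ 2 em).
        apply Rmult_lt_compat_l; auto; apply p2_pos.
        rewrite <- powerRZ_add by lra. rewrite Wq. apply p2_le. lia.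
      * set (e := floorR (ln v0 / ln 2)).
        pose proof (floorR_spec (ln v0 / ln 2)) as Fs. fold e in Fs.
        assert (Hv0 : 0 < v0) by (pose proof (p2_pos em); lra).
        assert (Le1 : powerRZ 2 e <= v0) by (apply le_log; auto; lra).
        assert (Lt1 : v0 < powerRZ 2 (e + 1)) by (apply lt_log; auto; rewrite plus_IZR; simpl; lra).
        assert (Hem : (em <= e)%Z).
        { assert (B1' : powerRZ 2 em <= v0) by lra. apply (le_log em v0 Hv0) in B1'. assert (IZR em < IZR (e + 1)) by (rewrite plus_IZR; simpl; lra).
          apply lt_IZR in H. lia. }
        assert (HeE : (e <= E)%Z).
        { apply (lt_log (E + 1) v0 Hv0) in B2. assert (IZR e < IZR (E + 1)) by lra.
          apply lt_IZR in H. lia. }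
        set (s0 := Z.to_nat (E - e)).
        exists (fun j => Nat.eqb j s0). split.
        -- intros s Hsm. apply (SG v (Vth E) HW Hs m s0); auto.
           ++ unfold s0; lia.
           ++ intros s' Hs'. fold v0. rewrite <- p2_nat.
              apply Rlt_le_trans with (powerRZ 2 (Z.of_nat s') * powerRZ 2 (e + 1)).
              apply Rmult_lt_compat_l; auto; apply p2_pos.
              rewrite <- powerRZ_add by lra. rewrite Wq. apply p2_le. unfold s0 in Hs'. lia.
           ++ fold v0. rewrite <- p2_nat. rewrite Wq.
              replace E with (Z.of_nat s0 + e)%Z at 1 by (unfold s0; lia).
              rewrite powerRZ_add by lra. apply Rmult_le_compat_l; auto. apply powerRZ_le; lra.
        -- rewrite tsum_delta by (unfold s0; lia). unfold qq. f_equal. unfold s0. lia.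
      * exists (fun j => Nat.eqb j 0). split.
        -- intros s Hsm. apply (SG v (Vth E) HW Hs m 0); auto. lia.
           intros; lia. fold v0. simpl. rewrite Wq. rewrite p2_succ in B2.
           pose proof (p2_pos E). lra.
        -- rewrite tsum_delta by lia. rewrite Q0; auto.
Qed.

Theorem lemma2 (k : ef_kind) (ein_min ein_max eout_min eout_max : Z)
  (syn : list synapse) :
  (ein_min <= ein_max)%Z ->
  (eout_min <= eout_max)%Z ->
  (forall w Fi, In (w, Fi) syn -> NoDup Fi) ->
  (forall w Fi tin, In (w, Fi) syn -> In tin Fi -> (tin < Twin ein_min ein_max)%nat) ->
  let Tin := Twin ein_min ein_max in
  let Tout := Twin eout_min eout_max in
  let x := Rmax (Vpre k ein_min eout_max syn (Tin - 1)) 0 in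
  (exists S, is_LTC k eout_min eout_max x S) /\
  (forall S, is_LTC k eout_min eout_max x S ->
     forall t : nat,
       ((Tin - 1 <= t <= Tin + Tout - 2)%nat /\ fires k ein_min eout_max syn t) <->
       (exists s, In s S /\ t = (Tin - 1 + s)%nat)).
Proof.
  intros Hin Hout Hnd Hsp. cbv zeta.
  set (m := Z.to_nat (eout_max - eout_min)).
  assert (Hm : Z.of_nat m = (eout_max - eout_min)%Z) by (unfold m; lia).
  assert (HTout : Twin eout_min eout_max = S m) by (unfold Twin, m; lia).
  assert (HTin : (1 <= Twin ein_min ein_max)%nat) by (unfold Twin; lia).
  rewrite HTout.
  set (n0 := (Twin ein_min ein_max - 1)%nat) in *.
  replace (Twin ein_min ein_max + S m - 2)%nat with (n0 + m)%nat by (unfold n0; lia).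
  set (v := fun s => Vpre k ein_min eout_max syn (n0 + s)).
  assert (Hstep : forall s, v (S s) = 2 * (v s + if Rle_dec (Vth eout_max) (v s)
                    then eta_amp k eout_max (v s) else 0)).
  { intros s. unfold v. rewrite Nat.add_succ_r. apply Vpre_step.
    intros w Fi tin H1 H2. pose proof (Hsp w Fi tin H1 H2). unfold n0. lia. }
  destruct (key k eout_min eout_max m v Hout Hm Hstep) as [f0 [K1 K2]].
  replace (Vpre k ein_min eout_max syn n0) with (v 0%nat) by (unfold v; rewrite Nat.add_0_r; auto).
  apply (final k ein_min eout_min eout_max syn n0 m (Rmax (v 0%nat) 0) f0); auto.
Qed.
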